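(* Suppose we are given two triples of real numbers $(x,y,z)$ and $(\tilde x,\tilde y,\tilde z)$ satisfying: (i) $x,\tilde x\in(-1,0)$ and $p_{0,-1}(\tilde x)>p_{0,-1}(x)$; (ii) $y\in(0,-x)$, $\tilde y\in(0,-\tilde x)$ and $p_{\tilde x,1}(\tilde y)\ge p_{x,1}(y)+\big(p_{0,-1}(\tilde x)-p_{0,-1}(x)\big)$; (iii) $0\le z<y$, $\tilde z\in(-\tilde y,\tilde y)$ and $$p_{\tilde y,\tilde x}(\tilde z)\ge p_{y,x}(z)+\big(p_{0,-\tilde x}(\tilde y)-p_{0,-x}(y)\big)+\ln\frac{\tilde y-\tilde x}{y-x}-\Big(\big(p_{\tilde x,1}(\tilde y)-p_{x,1}(y)\big)-\big(p_{0,-1}(\tilde x)-p_{0,-1}(x)\big)\Big).$$ Then $p_{\tilde y,-\tilde y}(\tilde z)>p_{y,-y}(z)$.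
   Context: Poincaré coordinates: for real $p\neq q$ and $w$ strictly between $p$ and $q$ (the oriented open interval $(p,q)$, where $p>q$ is allowed), $p_{p,q}(w)=\ln\frac{w-p}{q-w}$. *)

(* Defs.v *)
From Stdlib Require Import Reals.
Open Scope R_scope.

Definition pc (p q w : R) : R := ln ((w - p) / (q - w)).

(* Main.v *)
Require Import Defs.
From Stdlib Require Import Reals Lra Psatz.
Open Scope R_scope.
Lemma Qpos (a b y : R) : 0<y -> y<a -> a<b -> b<1 ->
 0 <= 2*(a*(1-b)*(1-y)+b*(1-a)*(y+a))*(a*(1-b)*(1-y)+b*(1-a)*(y+a))*b*(1-a)
   - (1+a)*((a*(1-b)*(1-y)+b*(1-a)*(y+a))*((a-y)*b*(1-a))*(1-2*b)
     +(a*(1-b)*(1-y)+b*(1-a)*(y+a))*(a*(1-b)*(1-y)*(y+a))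
     +((a-y)*b*(1-a))*(a*b*(1-b)*(1-y)-b*(1-a)*(y+a))).
Proof.
intros H1 H2 H3 H4.
set (s := a - y). set (r := b - a). set (w := 1 - b).
assert (Hs : 0 <= s) by (unfold s; lra). assert (Hr : 0 <= r) by (unfold r; lra).
assert (Hw : 0 <= w) by (unfold w; lra). assert (Hy : 0 <= y) by lra.
match goal with |- 0 <= ?e => replace e with (1 * (s^2 * r * w^5) + 7 * (s^2 * r^2 * w^4) + 19 * (s^2 * r^3 * w^3) + 25 * (s^2 * r^4 * w^2) + 16 * (s^2 * r^5 * w) + 4 * (s^2 * r^6) + 8 * (s^3 * r * w^4) + 39 * (s^3 * r^2 * w^3) + 70 * (s^3 * r^3 * w^2) + 55 * (s^3 * r^4 * w) + 16 * (s^3 * r^5) + 20 * (s^4 * r * w^3) + 64 * (s^4 * r^2 * w^2) + 68 * (s^4 * r^3 * w) + 24 * (s^4 * r^4) + 19 * (s^5 * r * w^2) + 35 * (s^5 * r^2 * w) + 16 * (s^5 * r^3) + 6 * (s^6 * r * w) + 4 * (s^6 * r^2) + 3 * (y * s * r * w^5) + 21 * (y * s * r^2 * w^4) + 57 * (y * s * r^3 * w^3) + 75 * (y * s * r^4 * w^2) + 48 * (y * s * r^5 * w) + 12 * (y * s * r^6) + 30 * (y * s^2 * r * w^4) + 147 * (y * s^2 * r^2 * w^3) + 264 * (y * s^2 * r^3 * w^2) + 207 * (y * s^2 * r^4 * w) + 60 * (y * s^2 * r^5) + 89 * (y * s^3 * r * w^3) + 286 * (y * s^3 * r^2 * w^2)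 + 305 * (y * s^3 * r^3 * w) + 108 * (y * s^3 * r^4) + 96 * (y * s^4 * r * w^2) + 180 * (y * s^4 * r^2 * w) + 84 * (y * s^4 * r^3) + 34 * (y * s^5 * r * w) + 24 * (y * s^5 * r^2) + 2 * (y^2 * r * w^5) + 14 * (y^2 * r^2 * w^4) + 38 * (y^2 * r^3 * w^3) + 50 * (y^2 * r^4 * w^2) + 32 * (y^2 * r^5 * w) + 8 * (y^2 * r^6) + 34 * (y^2 * s * r * w^4) + 168 * (y^2 * s * r^2 * w^3) + 302 * (y^2 * s * r^3 * w^2) + 236 * (y^2 * s * r^4 * w) + 68 * (y^2 * s * r^5) + 137 * (y^2 * s^2 * r * w^3) + 442 * (y^2 * s^2 * r^2 * w^2) + 473 * (y^2 * s^2 * r^3 * w) + 168 * (y^2 * s^2 * r^4) + 179 * (y^2 * s^3 * r * w^2) + 343 * (y^2 * s^3 * r^2 * w) + 164 * (y^2 * s^3 * r^3) + 74 * (y^2 * s^4 * r * w) + 56 * (y^2 * s^4 * r^2) + 12 * (y^3 * r * w^4) + 60 * (y^3 * r^2 * w^3) + 108 * (y^3 * r^3 * w^2) + 84 * (y^3 * r^4 * w) + 24 * (y^3 * r^5) + 88 * (y^3 * s * r * w^3) + 284 * (y^3 * s * r^2 * w^2) + 304 * (y^3 * s * r^3 * w) + 108 * (y^3 * s * r^4) + 154 * (y^3 * s^2 * r * w^2) + 302 * (y^3 * s^2 * r^2 * w) + 148 * (y^3 * s^2 * r^3) + 78 * (y^3 * s^3 * r * w) + 64 * (y^3 * s^3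 * r^2) + 20 * (y^4 * r * w^3) + 64 * (y^4 * r^2 * w^2) + 68 * (y^4 * r^3 * w) + 24 * (y^4 * r^4) + 60 * (y^4 * s * r * w^2) + 120 * (y^4 * s * r^2 * w) + 60 * (y^4 * s * r^3) + 40 * (y^4 * s^2 * r * w) + 36 * (y^4 * s^2 * r^2) + 8 * (y^5 * r * w^2) + 16 * (y^5 * r^2 * w) + 8 * (y^5 * r^3) + 8 * (y^5 * s * r * w) + 8 * (y^5 * s * r^2)) end.
- repeat apply Rplus_le_le_0_compat; apply Rmult_le_pos; try lra;
  repeat apply Rmult_le_pos; try apply pow_le; first [assumption | lra].
- unfold w, r, s. ring.
Qed.
Lemma alg (a b y t z w : R) : 0<y -> y<a -> a<b -> b<1 -> 0<t -> t<b -> 0<=z -> z<y -> -t<w -> w<t ->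
 (t+b)*(1-y)*(1-b)*a >= (y+a)*(1-t)*b*(1-a) ->
 (t-w)*(z+a)*((b-t)*y*(1-y)*(1-b)*a) >= (w+b)*(y-z)*(t*(a-y)*(1-t)*b*(1-a)) ->
 w*y < t*z.
Proof.
intros H1 H2 H3 H4 H5 H6 H7 H8 H9 H10 h H3'.
set (R := (b-t)*y*(1-y)*(1-b)*a) in *.
set (S := t*(a-y)*(1-t)*b*(1-a)) in *.
assert (HR : 0 < R) by (unfold R; repeat apply Rmult_lt_0_compat; lra).
assert (HS : 0 < S) by (unfold S; repeat apply Rmult_lt_0_compat; lra).
assert (L1 : (1-t)*(1+a)*(a-y)*b >= (1+b)*a*(1-y)*(b-t)).
{ assert (E: (1-t)*(1+a)*(a-y)*b - (1+b)*a*(1-y)*(b-t) = (t+b)*(1-y)*(1-b)*a - (y+a)*(1-t)*b*(1-a)) by ring. lra. }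
assert (A0 : b*(1-a)*(1+b) > a*(1-b)*(1+a)).
{ assert (E: b*(1-a)*(1+b) - a*(1-b)*(1+a) = (b-a)*(1+a+b-a*b)) by ring. assert (0 < (b-a)*(1+a+b-a*b)) by (apply Rmult_lt_0_compat; nra). lra. }
assert (A1 : a*a*(b-t)*(1-y)*(1-b) < b*b*(a-y)*(1-t)*(1-a)).
{ assert (P1 : 0 < a*(1-y)*(b-t)) by (repeat apply Rmult_lt_0_compat; lra).
  assert (b*(1-a)*((1-t)*(1+a)*(a-y)*b) >= b*(1-a)*((1+b)*a*(1-y)*(b-t))).
  { apply Rle_ge, Rmult_le_compat_l; [nra|lra]. }
  assert ((b*(1-a)*(1+b))*(a*(1-y)*(b-t)) > (a*(1-b)*(1+a))*(a*(1-y)*(b-t))).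
  { apply Rmult_gt_compat_r; lra. }
  nra. }
assert (A : t*a*R < S*b*y).
{ unfold R, S. assert (0 < t*y) by nra.
  replace (t*a*((b-t)*y*(1-y)*(1-b)*a)) with ((t*y)*(a*a*(b-t)*(1-y)*(1-b))) by ring.
  replace (t*(a-y)*(1-t)*b*(1-a)*b*y) with ((t*y)*(b*b*(a-y)*(1-t)*(1-a))) by ring.
  apply Rmult_lt_compat_l; lra. }
assert (G : (a-y)*(1-t)*b*(1-a)*(t+b) >= (y+a)*(b-t)*(1-y)*(1-b)*a).
{ pose proof (Qpos a b y H1 H2 H3 H4) as HQ.
  set (al := a*(1-b)*(1-y)+b*(1-a)*(y+a)) in *.
  set (c3 := (a-y)*b*(1-a)) in *.
  set (hh := a*(1-b)*(1-y)*(t+b)-b*(1-a)*(y+a)*(1-t)).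
  set (Qv := 2*al*al*b*(1-a) - (1+a)*(al*c3*(1-2*b)+al*(a*(1-b)*(1-y)*(y+a))+c3*(a*b*(1-b)*(1-y)-b*(1-a)*(y+a)))) in *.
  assert (Hal : 0 < al).
  { unfold al. assert (0 < a*(1-b)*(1-y)) by (repeat apply Rmult_lt_0_compat; lra). assert (0 < b*(1-a)*(y+a)) by (repeat apply Rmult_lt_0_compat; lra). lra. }
  assert (Hc3 : 0 <= c3) by (unfold c3; repeat apply Rmult_le_pos; lra).
  assert (Hh : 0 <= hh).
  { unfold hh. assert (E: a*(1-b)*(1-y)*(t+b)-b*(1-a)*(y+a)*(1-t) = (t+b)*(1-y)*(1-b)*a - (y+a)*(1-t)*b*(1-a)) by ring. lra. }
  assert (E : al*(1+a)*((a-y)*(1-t)*b*(1-a)*(t+b) - (y+a)*(b-t)*(1-y)*(1-b)*a)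
     = c3*(1+a)*hh*(b-t) + 2*al*b*(1-a)*hh + Qv*(b-t)) by (unfold Qv, hh, c3, al; ring).
  assert (0 <= c3*(1+a)*hh*(b-t)) by (repeat apply Rmult_le_pos; lra).
  assert (0 <= 2*al*b*(1-a)*hh) by (repeat apply Rmult_le_pos; lra).
  assert (0 <= Qv*(b-t)) by (apply Rmult_le_pos; lra).
  assert (0 <= al*(1+a)*((a-y)*(1-t)*b*(1-a)*(t+b) - (y+a)*(b-t)*(1-y)*(1-b)*a)) by lra.
  assert (0 < al*(1+a)) by nra.
  nra. }
assert (B : t*(y+a)*R <= S*y*(t+b)).
{ unfold R, S. assert (0 < t*y) by nra.
  replace (t*(y+a)*((b-t)*y*(1-y)*(1-b)*a)) with ((t*y)*((y+a)*(b-t)*(1-y)*(1-b)*a)) by ring.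
  replace (t*(a-y)*(1-t)*b*(1-a)*y*(t+b)) with ((t*y)*((a-y)*(1-t)*b*(1-a)*(t+b))) by ring.
  apply Rmult_le_compat_l; lra. }
assert (F : t*(z+a)*R < S*(b*y+t*z)).
{ assert (E : y*(t*z*(R-S) + t*a*R - S*b*y) = (y-z)*(t*a*R - S*b*y) + z*(t*y*(R-S)+t*a*R - S*b*y)) by ring.
  assert ((y-z)*(t*a*R - S*b*y) < 0) by (apply Rmult_pos_neg; lra) .
  assert (z*(-(t*y*(R-S)+t*a*R - S*b*y)) >= 0) by (apply Rle_ge, Rmult_le_pos; lra).
  nra. }
assert (X : (t*z - w*y)*((z+a)*R + (y-z)*S) > 0).
{ assert (y*((t-w)*(z+a)*R) >= y*((w+b)*(y-z)*S)) by (apply Rle_ge, Rmult_le_compat_l; lra).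
  assert ((y-z)*(t*(z+a)*R) < (y-z)*(S*(b*y+t*z))) by (apply Rmult_lt_compat_l; lra).
  nra. }
assert (0 < (z+a)*R + (y-z)*S) by nra.
nra.
Qed.

Lemma pc_eq p q w n d : (w-p)/(q-w) = n/d -> 0<n -> 0<d -> pc p q w = ln n - ln d.
Proof. intros E Hn Hd. unfold pc. rewrite E. unfold Rdiv. rewrite ln_mult, ln_Rinv; try ring; try assumption. apply Rinv_0_lt_compat; assumption. Qed.

Lemma ln_ge p q : 0<p -> 0<q -> ln p >= ln q -> p >= q.
Proof. intros Hp Hq H. destruct (Rlt_or_le p q) as [Hlt|Hle]; [|lra].
  pose proof (ln_increasing p q Hp Hlt). lra. Qed.

Ltac pos := repeat apply Rmult_lt_0_compat; lra.
Ltac fs := solve [field; repeat split; lra | lra].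

Theorem lemma4p1 (x y z xt yt zt : R) :
  (* (i) *)
  (-1 < x /\ x < 0) -> (-1 < xt /\ xt < 0) ->
  pc 0 (-1) xt > pc 0 (-1) x ->
  (* (ii) *)
  (0 < y /\ y < - x) -> (0 < yt /\ yt < - xt) ->
  pc xt 1 yt >= pc x 1 y + (pc 0 (-1) xt - pc 0 (-1) x) ->
  (* (iii) *)
  (0 <= z /\ z < y) -> (- yt < zt /\ zt < yt) ->
  pc yt xt zt >=
    pc y x z + (pc 0 (- xt) yt - pc 0 (- x) y)
    + ln ((yt - xt) / (y - x))
    - ((pc xt 1 yt - pc x 1 y) - (pc 0 (-1) xt - pc 0 (-1) x)) ->
  pc yt (- yt) zt > pc y (- y) z.
Proof.
intros [Hx1 Hx2] [Hxt1 Hxt2] Hi [Hy1 Hy2] [Hyt1 Hyt2] Hii [Hz1 Hz2] [Hzt1 Hzt2] Hiii.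
rewrite (pc_eq 0 (-1) xt (-xt) (1 - -xt)) in Hi, Hii, Hiii by fs.
rewrite (pc_eq 0 (-1) x (-x) (1 - -x)) in Hi, Hii, Hiii by fs.
rewrite (pc_eq xt 1 yt (yt + -xt) (1 - yt)) in Hii, Hiii by fs.
rewrite (pc_eq x 1 y (y + -x) (1 - y)) in Hii, Hiii by fs.
rewrite (pc_eq 0 (-xt) yt yt (-xt - yt)) in Hiii by fs.
rewrite (pc_eq 0 (-x) y y (-x - y)) in Hiii by fs.
rewrite (pc_eq yt xt zt (yt - zt) (zt + -xt)) in Hiii by fs.
rewrite (pc_eq y x z (y - z) (z + -x)) in Hiii by fs.
rewrite (pc_eq yt (-yt) zt (yt - zt) (yt + zt)) by fs.
rewrite (pc_eq y (-y) z (y - z) (y + z)) by fs.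
replace ((yt - xt) / (y - x)) with ((yt + -xt)/(y + -x)) in Hiii by fs.
unfold Rdiv in Hiii. rewrite ln_mult, ln_Rinv in Hiii by (try apply Rinv_0_lt_compat; lra).
assert (Hb : -x < -xt).
{ assert (H : (-x) * (1 - -xt) < (-xt) * (1 - -x)).
  { apply ln_lt_inv; try pos. rewrite !ln_mult by lra. lra. }
  lra. }
assert (Hh : (yt + -xt)*(1-y)*(1 - -xt)*(-x) >= (y + -x)*(1-yt)*(-xt)*(1 - -x)).
{ apply ln_ge; try pos. rewrite !ln_mult by pos. lra. }
assert (H3 : (yt-zt)*(z + -x)*((-xt-yt)*y*(1-y)*(1 - -xt)*(-x)) >= (zt + -xt)*(y-z)*(yt*(-x-y)*(1-yt)*(-xt)*(1 - -x))).
{ apply ln_ge; try pos. rewrite !ln_mult by pos. lra. }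
assert (K : zt*y < yt*z).
{ apply (alg (-x) (-xt) y yt z zt); try exact Hh; try exact H3; lra. }
assert (L : (y-z)*(yt+zt) < (yt-zt)*(y+z)).
{ assert (E : (yt-zt)*(y+z) - (y-z)*(yt+zt) = 2*(yt*z - zt*y)) by ring. lra. }
assert (P0 : 0 < (y-z)*(yt+zt)) by pos.
pose proof (ln_increasing _ _ P0 L) as HL.
rewrite !ln_mult in HL by lra. lra.
Qed.
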